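(* Let $\Phi\colon\mathcal{X}\to\mathcal{X}$ be an involution, $\Pi$ a closed convex family of conditional distributions $\pi\colon\mathcal{X}\to\Delta(\mathcal{Y})$, $\pi^*\in\mathcal{C}_{\mathrm{coh}}\cap\Pi$, and let $F(p)=\sum_kp_k\log p_k$ be the negative entropy on $\mathbb{R}^d_+$, so $\mathsf{B}_F=\mathsf{D}_{\mathrm{KL}}$ is the unnormalized relative entropy. Let $\overline\pi\in\arg\min_{\pi\in\mathcal{C}^\dagger_{\mathrm{coh}}}\mathsf{B}(\pi\parallel\pi_0)$ and $\widehat{\widehat\pi}\in\arg\min_{\pi\in\mathcal{C}_{\mathrm{coh}}\cap\Pi}\mathsf{B}(\pi\parallel\overline\pi)$. Then $$\mathbb{E}[\mathsf{D}_{\mathrm{KL}}(\pi^*(x)\parallel\pi_0(x))]-\mathbb{E}[\mathsf{D}_{\mathrm{KL}}(\pi^*(x)\parallel\widehat{\widehat\pi}(x))]\ge\mathbb{E}_{x\sim\mathcal{D}_{\mathcal{X}}}\Big[2\min\{\lambda(x),1-\lambda(x)\}\,\mathsf{D}^2_{\mathrm{Hell}}(\pi_0(x)\parallel\pi_0(\Phi(x)))\Big],$$ where $\lambda(x)=\frac{\mathbb{P}[x]}{\mathbb{P}[x]+\mathbb{P}[\Phi(x)]}$.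
   Context: $\mathcal{X},\mathcal{Y}$ finite, $d=|\mathcal{Y}|$; $\Pi_{\mathrm{all}}=\Delta(\mathcal{Y})^{\mathcal{X}}$; $\pi_0\in\Pi_{\mathrm{all}}$ baseline; $\mathcal{D}_{\mathcal{X}}$ full-support distribution on $\mathcal{X}$, $\mathbb{P}[x]=\mathcal{D}_{\mathcal{X}}(x)$, $\mathbb{E}=\mathbb{E}_{x\sim\mathcal{D}_{\mathcal{X}}}$. $\mathsf{B}(\pi\parallel\pi')=\mathbb{E}[\mathsf{B}_F(\pi(x)\parallel\pi'(x))]$. $\mathcal{C}^\dagger_{\mathrm{coh}}=\{\pi\in(\mathbb{R}^d_+)^{\mathcal{X}}:\pi(x)=\pi(\Phi(x))\ \forall x\}$, $\mathcal{C}_{\mathrm{coh}}=\mathcal{C}^\dagger_{\mathrm{coh}}\cap\Pi_{\mathrm{all}}$. Squared Hellinger distance: $\mathsf{D}^2_{\mathrm{Hell}}(p\parallel q)=1-\sum_k\sqrt{p_kq_k}$. *)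

(* Defs.v *)
From HB Require Import structures.
From mathcomp Require Import all_boot all_order all_algebra.
From mathcomp Require Import boolp classical_sets reals constructive_ereal ereal exp.
Set Implicit Arguments. Unset Strict Implicit. Unset Printing Implicit Defensive.
Import Order.TTheory GRing.Theory Num.Theory.
Local Open Scope ring_scope.

Section Defs.
Variables (R : realType) (X Y : finType).

Definition policy := X -> Y -> R.

Definition in_simplex (p : Y -> R) : Prop :=
  (forall k, 0 <= p k) /\ \sum_(k : Y) p k = 1.

Definition Pi_all (pi : policy) : Prop := forall x, in_simplex (pi x).

Definition full_support_distr (P : X -> R) : Prop :=
  (forall x, 0 < P x) /\ \sum_(x : X) P x = 1.

Definition involution (Phi : X -> X) : Prop := forall x, Phi (Phi x) = x.

Definition C_coh_dag (Phi : X -> X) (pi : policy) : Prop :=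
  (forall x k, 0 <= pi x k) /\ (forall x, pi x = pi (Phi x)).

Definition C_coh (Phi : X -> X) (pi : policy) : Prop :=
  C_coh_dag Phi pi /\ Pi_all pi.

Definition convex_family (Pi : policy -> Prop) : Prop :=
  forall p q, Pi p -> Pi q -> forall t : R, 0 <= t <= 1 ->
    Pi (fun x k => t * p x k + (1 - t) * q x k).

(* closedness in (R^Y)^X (finite-dimensional, so = sequential closedness
   under coordinatewise convergence) *)
Definition closed_family (Pi : policy -> Prop) : Prop :=
  forall (u : nat -> policy) (l : policy), (forall n, Pi (u n)) ->
    (forall x k (e : R), 0 < e -> exists N, forall n, (N <= n)%N ->
        `|u n x k - l x k| < e) ->
    Pi l.

(* Bregman divergence of F(p) = sum_k p_k log p_k, coordinatewise, with the
   usual conventions 0 log 0 = 0 and p log(p/0) = +oo for p > 0 *)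
Definition kl_term (p q : R) : \bar R :=
  if p == 0 then q%:E
  else if q == 0 then +oo%E
  else (p * ln (p / q) - p + q)%:E.

Definition KL (p q : Y -> R) : \bar R := (\sum_(k : Y) kl_term (p k) (q k))%E.

Definition Bdiv (P : X -> R) (pi pi' : policy) : \bar R :=
  (\sum_(x : X) (P x)%:E * KL (pi x) (pi' x))%E.

Definition hell2 (p q : Y -> R) : R := 1 - \sum_(k : Y) Num.sqrt (p k * q k).

Definition lambda (P : X -> R) (Phi : X -> X) (x : X) : R :=
  P x / (P x + P (Phi x)).

End Defs.

(* Main.v *)
Require Import Defs.
From HB Require Import structures.
From mathcomp Require Import all_boot all_order all_algebra.
From mathcomp Require Import boolp classical_sets reals constructive_ereal ereal exp.
From mathcomp Require Import sequences ring lra.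
Set Implicit Arguments. Unset Strict Implicit. Unset Printing Implicit Defensive.
Import Order.TTheory GRing.Theory Num.Theory.
Local Open Scope ring_scope.

Section Scalar.
Variable R : realType.

Definition kr (p q : R) : R := if p == 0 then q else p * ln (p / q) - p + q.

Lemma ln_le_sub1 (y : R) : 0 < y -> ln y <= y - 1.
Proof. move=> y0; have := @le_ln1Dx R (y - 1); rewrite (_ : 1 + (y - 1) = y); last by ring. apply; lra. Qed.

Lemma ln_divE (x y : R) : 0 < x -> 0 < y -> ln (x / y) = ln x - ln y.
Proof. by move=> x0 y0; rewrite ln_div// posrE. Qed.

Lemma kl_term_fin (p q : R) : (p != 0 -> q != 0) -> kl_term p q = (kr p q)%:E.
Proof.
rewrite /kl_term /kr; case: eqP => // _ /(_ isT) q0.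
by rewrite (negbTE q0).
Qed.

Lemma kr_ge0 (p q : R) : 0 <= p -> 0 <= q -> (p != 0 -> q != 0) -> 0 <= kr p q.
Proof.
rewrite /kr => p0 q0; case: eqP => // /eqP pn0 /(_ isT) qn0.
have pp : 0 < p by rewrite lt_def pn0.
have qp : 0 < q by rewrite lt_def qn0.
have h := ln_le_sub1 (divr_gt0 qp pp).
have e : ln (p / q) = - ln (q / p) by rewrite !ln_divE //; ring.
rewrite e.
have h2 : p * ln (q / p) <= p * (q / p - 1) by rewrite ler_pM2l.
have h3 : p * (q / p - 1) = q - p by field; rewrite gt_eqF.
lra.
Qed.

Lemma kr_le_sq (u a : R) : 0 <= u -> 0 < a -> kr u a <= (u - a) ^+ 2 / a.
Proof.
rewrite /kr => u0 a0; case: eqP => [->|/eqP un0].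
  by rewrite sub0r sqrrN expr2 mulfK ?gt_eqF.
have up : 0 < u by rewrite lt_def un0.
have h := ln_le_sub1 (divr_gt0 up a0).
have h2 : u * ln (u / a) <= u * (u / a - 1) by rewrite ler_pM2l.
have h3 : (u - a) ^+ 2 / a = u * (u / a - 1) - u + a by field; rewrite gt_eqF.
lra.
Qed.

Lemma kr_three (u a c : R) : 0 <= u -> 0 < a -> 0 < c ->
  kr u c = kr u a + kr a c + (u - a) * (ln a - ln c).
Proof.
rewrite /kr => u0 a0 c0; rewrite (gt_eqF a0).
case: eqP => [->|/eqP un0]; first by rewrite ln_divE //; ring.
have up : 0 < u by rewrite lt_def un0.
rewrite !ln_divE //; ring.
Qed.

Lemma kr_pair (q p p' : R) : 0 <= q -> 0 <= p -> 0 <= p' ->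
  (q != 0 -> p != 0) -> (q != 0 -> p' != 0) ->
  (Num.sqrt p - Num.sqrt p') ^+ 2 <= kr q p + kr q p'.
Proof.
move=> q0 p0 p'0 hp hp'.
have E : (Num.sqrt p - Num.sqrt p') ^+ 2 = p + p' - 2 * (Num.sqrt p * Num.sqrt p').
  by rewrite sqrrB !sqr_sqrtr //; ring.
rewrite E /kr; case: eqP => [_|/eqP qn0].
  have : 0 <= Num.sqrt p * Num.sqrt p' by rewrite mulr_ge0 ?sqrtr_ge0.
  lra.
have pp : 0 < p by rewrite lt_def hp.
have pp' : 0 < p' by rewrite lt_def hp'.
have qp : 0 < q by rewrite lt_def qn0.
set s := Num.sqrt p * Num.sqrt p'.
have sp : 0 < s by rewrite mulr_gt0 ?sqrtr_gt0.
have ss : s * s = p * p' by rewrite /s mulrACA -!expr2 !sqr_sqrtr // ltW.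
have lns : ln p + ln p' = 2 * ln s.
  by rewrite -lnM ?posrE // -ss lnM ?posrE //; ring.
have k := kr_ge0 (ltW qp) (ltW sp) (fun _ => lt0r_neq0 sp).
rewrite /kr (negbTE qn0) in k.
rewrite !ln_divE // in k *.
have lp' : ln p' = 2 * ln s - ln p by lra.
rewrite lp'.
have e : q * (ln q - ln p) + q * (ln q - (2 * ln s - ln p)) = 2 * (q * (ln q - ln s)) by ring.
lra.
Qed.

End Scalar.
Section Core.
Variables (R : realType) (S : finType) (w a b c : S -> R).
Hypotheses (hw : forall s, 0 < w s) (ha : forall s, 0 <= a s)
  (hb : forall s, 0 <= b s) (hc : forall s, 0 <= c s)
  (hbc : forall s, b s != 0 -> c s != 0) (hac : forall s, a s != 0 -> c s != 0).

Definition Fr (u : S -> R) := \sum_s w s * kr (u s) (c s).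
Definition comb (t : R) := fun s => t * b s + (1 - t) * a s.

Hypothesis hmin : forall t, 0 < t -> t <= 1 -> Fr a <= Fr (comb t).

Let pos (x : R) : 0 <= x -> x != 0 -> 0 < x.
Proof. by move=> x0 xn; rewrite lt_def xn. Qed.

Lemma core_supp s0 : b s0 != 0 -> a s0 != 0.
Proof.
move=> bs0; apply/negP => /eqP as0.
pose B s := if a s == 0 then `|b s * ln (b s / c s) - b s|
            else (b s - a s) ^+ 2 / a s + `|(b s - a s) * (ln (a s) - ln (c s))|.
have Bge0 s : 0 <= B s.
  rewrite /B; case: eqP => [_|/eqP anz]; first exact: normr_ge0.
  by rewrite addr_ge0 // divr_ge0 ?sqr_ge0 ?ha.
have diffb t : 0 < t -> t <= 1 -> forall s,
    kr (comb t s) (c s) - kr (a s) (c s) <=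
    t * (B s + (if a s == 0 then b s * ln t else 0)).
  move=> t0 t1 s; rewrite /B /comb; case: eqP => [az|/eqP anz].
    rewrite az (_ : t * b s + (1 - t) * 0 = t * b s); last by ring.
    case: (eqVneq (b s) 0) => [bz|bnz].
      by rewrite bz mulr0 subrr !mul0r subr0 normr0 addr0 mulr0.
    have cp : 0 < c s by apply: pos; [exact: hc | exact: hbc].
    have bp : 0 < b s by apply: pos.
    have tbn : t * b s != 0 by rewrite mulf_neq0 // lt0r_neq0.
    have lnE : ln (t * b s / c s) = ln t + ln (b s / c s).
      by rewrite -mulrA; apply: lnM; rewrite posrE ?divr_gt0.
    rewrite /kr eqxx (negbTE tbn) lnE.
    set K := b s * ln (b s / c s) - b s.
    have hK : t * K <= t * `|K| by rewrite ler_wpM2l ?ler_norm ?ltW.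
    have e1 : t * b s * (ln t + ln (b s / c s)) - t * b s + c s - c s
       = t * K + t * (b s * ln t) by rewrite /K; ring.
    have e2 : t * (`|K| + b s * ln t) = t * `|K| + t * (b s * ln t) by ring.
    rewrite e1 e2; lra.
  have ap : 0 < a s by apply: pos.
  have cp : 0 < c s by apply: pos; [exact: hc | exact: hac].
  have u0 : 0 <= t * b s + (1 - t) * a s.
    have := hb s; have := ha s; have : 0 <= 1 - t by rewrite subr_ge0.
    move=> h1t h0a h0b; apply: addr_ge0; apply: mulr_ge0 => //; exact: ltW.
  rewrite (kr_three u0 ap cp).
  have h1 := kr_le_sq u0 ap.
  have eu : t * b s + (1 - t) * a s - a s = t * (b s - a s) by ring.
  rewrite eu in h1 *.
  set D := (b s - a s) ^+ 2 / a s.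
  set E := (b s - a s) * (ln (a s) - ln (c s)).
  have D0 : 0 <= D by rewrite divr_ge0 ?sqr_ge0 ?ltW.
  have e3 : (t * (b s - a s)) ^+ 2 / a s = t * (t * D) by rewrite /D; field; exact: lt0r_neq0.
  have h2 : t * D <= D by rewrite ler_piMl.
  have h3 : t * (t * D) <= t * D by apply: ler_wpM2l => //; exact: ltW.
  have hE : t * E <= t * `|E| by rewrite ler_wpM2l ?ler_norm ?ltW.
  have e4 : t * (b s - a s) * (ln (a s) - ln (c s)) = t * E by rewrite /E; ring.
  have e5 : t * (D + `|E| + 0) = t * D + t * `|E| by ring.
  rewrite e3 in h1; rewrite e4 e5; lra.
pose T := \sum_s w s * B s.
have T0 : 0 <= T by apply: sumr_ge0 => s _; apply: mulr_ge0 => //; exact: ltW.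
have w0b0 : 0 < w s0 * b s0 by apply: mulr_gt0 => //; exact: pos.
pose M := T / (w s0 * b s0) + 1.
have M0 : 0 < M by rewrite /M ltr_wpDl // divr_ge0 // ltW.
pose t := expR (- M).
have t0 : 0 < t by apply: expR_gt0.
have t1 : t <= 1 by rewrite /t expR_le1 oppr_le0 ltW.
have lnt : ln t = - M by rewrite /t expRK.
have := hmin t0 t1; rewrite -subr_ge0 /Fr -sumrB.
have sb : \sum_s (w s * kr (comb t s) (c s) - w s * kr (a s) (c s))
   <= t * (T + w s0 * b s0 * ln t).
  have eT : T = w s0 * B s0 + \sum_(i | i != s0) w i * B i by rewrite /T (bigD1 s0).
  rewrite (bigD1 s0) //= -mulrBr.
  have := diffb t t0 t1 s0; rewrite as0 eqxx => h0.
  have hs0 : w s0 * (kr (comb t s0) (c s0) - kr 0 (c s0)) <=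
     t * (w s0 * B s0) + t * (w s0 * b s0 * ln t).
    have e : t * (w s0 * B s0) + t * (w s0 * b s0 * ln t) = w s0 * (t * (B s0 + b s0 * ln t)) by ring.
    by rewrite e; apply: ler_wpM2l => //; exact: ltW.
  have hr : \sum_(i | i != s0) (w i * kr (comb t i) (c i) - w i * kr (a i) (c i))
      <= t * \sum_(i | i != s0) (w i * B i).
    rewrite mulr_sumr; apply: ler_sum => s _; rewrite -mulrBr.
    have := diffb t t0 t1 s.
    have hif : (if a s == 0 then b s * ln t else 0) <= 0.
      case: ifP => // _; apply: mulr_ge0_le0; [exact: hb | exact: ln_le0].
    move=> h.
    have e : t * (w s * B s) = w s * (t * B s) by ring.
    rewrite e; apply: ler_wpM2l; first exact: ltW.
    apply: (le_trans h); apply: ler_wpM2l; first exact: ltW.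
    lra.
  have e2 : t * (T + w s0 * b s0 * ln t) = t * (w s0 * B s0) + t * \sum_(i | i != s0) (w i * B i) + t * (w s0 * b s0 * ln t).
    by rewrite eT; ring.
  rewrite e2; lra.
have : t * (T + w s0 * b s0 * ln t) < 0.
  rewrite pmulr_rlt0 // lnt /M.
  have e : w s0 * b s0 * - (T / (w s0 * b s0) + 1) = - T - w s0 * b s0.
    by field; rewrite bs0 lt0r_neq0.
  rewrite e; lra.
lra.
Qed.

Lemma core_iden (u : S -> R) : (forall s, 0 <= u s) -> (forall s, a s = 0 -> u s = 0) ->
  forall s, kr (u s) (c s) = kr (u s) (a s) + kr (a s) (c s) + (u s - a s) * (ln (a s) - ln (c s)).
Proof.
move=> u0 uz s; case: (eqVneq (a s) 0) => [az|anz].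
  rewrite (uz s az) az /kr eqxx; ring.
apply: kr_three; first exact: u0.
  exact: pos.
apply: pos; [exact: hc | exact: hac].
Qed.

Lemma core_pyth : \sum_s w s * kr (b s) (a s) + Fr a <= Fr b.
Proof.
have hba s : a s = 0 -> b s = 0.
  by move=> az; apply/eqP; apply: contraT => /core_supp; rewrite az eqxx.
have cge0 t : 0 < t -> t <= 1 -> forall s, 0 <= comb t s.
  move=> t0 t1 s; rewrite /comb.
  have := hb s; have := ha s; have : 0 <= 1 - t by rewrite subr_ge0.
  move=> h1t h0a h0b; apply: addr_ge0; apply: mulr_ge0 => //; exact: ltW.
have cz t s : a s = 0 -> comb t s = 0.
  by move=> az; rewrite /comb az (hba s az); ring.
pose L := \sum_s w s * ((b s - a s) * (ln (a s) - ln (c s))).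
pose Q := \sum_s w s * ((b s - a s) ^+ 2 / a s).
have eb : Fr b = \sum_s w s * kr (b s) (a s) + Fr a + L.
  rewrite /Fr /L -!big_split /=; apply: eq_bigr => s _.
  rewrite (core_iden hb hba); ring.
have eu t : 0 < t -> t <= 1 ->
    Fr (comb t) = \sum_s w s * kr (comb t s) (a s) + Fr a + t * L.
  move=> t0 t1; rewrite /Fr /L mulr_sumr -!big_split /=; apply: eq_bigr => s _.
  rewrite (core_iden (cge0 t t0 t1) (cz t)) /comb; ring.
have kq t : 0 < t -> t <= 1 -> \sum_s w s * kr (comb t s) (a s) <= t ^+ 2 * Q.
  move=> t0 t1; rewrite /Q mulr_sumr; apply: ler_sum => s _.
  have e : t ^+ 2 * (w s * ((b s - a s) ^+ 2 / a s)) = w s * ((t * (b s - a s)) ^+ 2 / a s).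
    by rewrite exprMn; rewrite !mulrA; congr (_ * _); ring.
  rewrite e; apply: ler_wpM2l; first exact: ltW.
  case: (eqVneq (a s) 0) => [az|anz].
    by rewrite (cz t s az) az /kr eqxx invr0 mulr0.
  have := kr_le_sq (cge0 t t0 t1 s) (pos (ha s) anz).
  by rewrite (_ : comb t s - a s = t * (b s - a s)) // /comb; ring.
have Q0 : 0 <= Q.
  apply: sumr_ge0 => s _; apply: mulr_ge0; first exact: ltW.
  by apply: divr_ge0; [exact: sqr_ge0 | exact: ha].
have main t : 0 < t -> t <= 1 -> 0 <= t * Q + L.
  move=> t0 t1; have := hmin t0 t1; rewrite (eu t t0 t1) => h.
  have := kq t t0 t1 => h2.
  have : 0 <= t * (t * Q + L).
    have e : t * (t * Q + L) = t ^+ 2 * Q + t * L by ring.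
    rewrite e; lra.
  by rewrite pmulr_rge0.
have L0 : 0 <= L.
  rewrite leNgt; apply/negP => L0.
  have QL : 0 < Q - L by lra.
  pose t := - L / (Q - L).
  have t0 : 0 < t by rewrite /t divr_gt0 // oppr_gt0.
  have t1 : t <= 1 by rewrite /t ler_pdivrMr // mul1r; lra.
  have := main t t0 t1.
  have e : t * Q + L = - (L * L) / (Q - L) by rewrite /t; field; exact: lt0r_neq0.
  rewrite e.
  have : 0 < L * L by rewrite nmulr_rgt0.
  move=> LL; rewrite leNgt => /negP; apply.
  by rewrite mulNr oppr_lt0 divr_gt0.
rewrite eb; lra.
Qed.

End Core.

Section EPyth.
Variables (R : realType) (X Y : finType) (P : X -> R).
Hypothesis hP : forall x, 0 < P x.

Definition nonneg (p : policy R X Y) := forall x k, 0 <= p x k.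

Lemma kl_term_ge0 (p q : R) : 0 <= p -> 0 <= q -> (0 <= kl_term p q)%E.
Proof.
move=> p0 q0; rewrite /kl_term; case: eqP => [_|/eqP pn0]; first by rewrite lee_fin.
case: eqP => [_|/eqP qn0]; first by rewrite leey.
have := kr_ge0 p0 q0 (fun _ => qn0); rewrite /kr (negbTE pn0) => h.
by rewrite lee_fin.
Qed.

Lemma KL_ge0 (p q : Y -> R) : (forall k, 0 <= p k) -> (forall k, 0 <= q k) -> (0 <= KL p q)%E.
Proof. by move=> hp hq; apply: sume_ge0 => k _; apply: kl_term_ge0. Qed.

Lemma Bdiv_ge0 (b c : policy R X Y) : nonneg b -> nonneg c -> (0 <= Bdiv P b c)%E.
Proof.
move=> hb hc; apply: sume_ge0 => x _; apply: mule_ge0; first by rewrite lee_fin ltW.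
by apply: KL_ge0.
Qed.

Lemma sum_oo (I : finType) (f : I -> \bar R) i0 :
  (forall i, (0 <= f i)%E) -> f i0 = +oo%E -> (\sum_i f i)%E = +oo%E.
Proof.
move=> h0 hi; rewrite (bigD1 i0) //= hi addye //.
have : (0 <= \sum_(i | i != i0) f i)%E by apply: sume_ge0.
by case: (\sum_(i | i != i0) f i)%E.
Qed.

Lemma Bdiv_inf (b c : policy R X Y) : nonneg b -> nonneg c ->
  (exists x k, b x k != 0 /\ c x k = 0) -> Bdiv P b c = +oo%E.
Proof.
move=> hb hc [x [k [bn cz]]].
apply: (sum_oo (i0 := x)).
  by move=> x' ; apply: mule_ge0; [rewrite lee_fin ltW | apply: KL_ge0].
rewrite /KL (sum_oo (i0 := k)); last first.
- by rewrite /kl_term (negbTE bn) cz eqxx.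
- by move=> k'; apply: kl_term_ge0.
by rewrite gt0_muley // lte_fin.
Qed.

Lemma flatten_sum (f : X -> Y -> R) :
  \sum_x P x * \sum_k f x k = \sum_(s : X * Y) P s.1 * f s.1 s.2.
Proof.
under eq_bigr do rewrite mulr_sumr.
by rewrite pair_big /=.
Qed.

Lemma Bdiv_fin (b c : policy R X Y) : (forall x k, b x k != 0 -> c x k != 0) ->
  Bdiv P b c = (\sum_(s : X * Y) P s.1 * kr (b s.1 s.2) (c s.1 s.2))%:E.
Proof.
move=> h; rewrite -(flatten_sum (fun x k => kr (b x k) (c x k))) /Bdiv -sumEFin; apply: eq_bigr => x _.
rewrite EFinM /KL -sumEFin; congr (_ * _)%E; apply: eq_bigr => k _.
by rewrite kl_term_fin //; apply: h.
Qed.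

Lemma epyth (a b c : policy R X Y) : nonneg a -> nonneg b -> nonneg c ->
  (forall t : R, 0 < t -> t <= 1 ->
     (Bdiv P a c <= Bdiv P (fun x k => (t * b x k + (1 - t) * a x k)%R) c)%E) ->
  (Bdiv P b a + Bdiv P a c <= Bdiv P b c)%E.
Proof.
move=> ha hb hc H.
case: (pselect (exists x k, b x k != 0 /\ c x k = 0)) => [ex|nex].
  by rewrite (Bdiv_inf hb hc ex) leey.
have hbc x k : b x k != 0 -> c x k != 0.
  by move=> bn; apply/eqP => cz; apply: nex; exists x, k.
have e1 : (fun x k => 1 * b x k + (1 - 1) * a x k) = b.
  by apply/funext => x; apply/funext => k; rewrite subrr mul0r addr0 mul1r.
have H1 := H 1 ltr01 (lexx _); rewrite e1 (Bdiv_fin hbc) in H1.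
have hac x k : a x k != 0 -> c x k != 0.
  move=> an; apply/eqP => cz.
  by move: H1; rewrite (Bdiv_inf ha hc); [|exists x, k].
pose w (s : X * Y) := P s.1.
pose a' (s : X * Y) := a s.1 s.2.
pose b' (s : X * Y) := b s.1 s.2.
pose c' (s : X * Y) := c s.1 s.2.
have hw s : 0 < w s by apply: hP.
have ha' s : 0 <= a' s by apply: ha.
have hb' s : 0 <= b' s by apply: hb.
have hc' s : 0 <= c' s by apply: hc.
have hbc' s : b' s != 0 -> c' s != 0 by apply: hbc.
have hac' s : a' s != 0 -> c' s != 0 by apply: hac.
have hmin : forall t, 0 < t -> t <= 1 -> Fr w c' a' <= Fr w c' (comb a' b' t).
  move=> t t0 t1; have := H t t0 t1.
  have hcomb x k : t * b x k + (1 - t) * a x k != 0 -> c x k != 0.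
    move=> hn; case: (eqVneq (b x k) 0) => [bz|]; last exact: hbc.
    by apply: hac; move: hn; rewrite bz mulr0 add0r; apply: contra => /eqP ->; rewrite mulr0.
  by rewrite (Bdiv_fin hac) (Bdiv_fin hcomb) lee_fin.
have hba x k : b x k != 0 -> a x k != 0.
  move=> bn; exact: (core_supp hw ha' hb' hc' hbc' hac' hmin (s0 := (x, k))).
rewrite (Bdiv_fin hba) (Bdiv_fin hac) (Bdiv_fin hbc) -EFinD lee_fin.
exact: (core_pyth hw ha' hb' hc' hbc' hac' hmin).
Qed.

End EPyth.

Section Hell.
Variables (R : realType) (X Y : finType) (P : X -> R) (Phi : X -> X).
Hypotheses (hP : forall x, 0 < P x) (HPhi : involution Phi).

Lemma sum_inv (f : X -> R) : \sum_x f (Phi x) = \sum_x f x.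
Proof. by rewrite [RHS](reindex_inj (can_inj HPhi)). Qed.

Lemma hell_bound (pi0 q : policy R X Y) : Pi_all pi0 -> nonneg q ->
  (forall x, q x = q (Phi x)) ->
  ((\sum_(x : X) P x * (2 * Num.min (lambda P Phi x) (1 - lambda P Phi x)
                              * hell2 (pi0 x) (pi0 (Phi x))))%:E
   <= Bdiv P q pi0)%E.
Proof.
move=> hpi hq hcoh.
have hp0 : nonneg pi0 by move=> x k; case: (hpi x) => h _; exact: h.
case: (pselect (exists x k, q x k != 0 /\ pi0 x k = 0)) => [ex|nex].
  by rewrite (Bdiv_inf hP hq hp0 ex) leey.
have hq0 x k : q x k != 0 -> pi0 x k != 0.
  by move=> bn; apply/eqP => cz; apply: nex; exists x, k.
rewrite (Bdiv_fin P hq0) -(flatten_sum P (fun x k => kr (q x k) (pi0 x k))) lee_fin.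
pose G x := \sum_k kr (q x k) (pi0 x k).
pose W x := P x + P (Phi x).
pose mn x := Num.min (P x) (P (Phi x)).
pose H x := hell2 (pi0 x) (pi0 (Phi x)).
have Wp x : 0 < W x by rewrite addr_gt0.
have mnp x : 0 < mn x by rewrite /mn lt_min !hP.
have WPhi x : W (Phi x) = W x by rewrite /W HPhi addrC.
have mnPhi x : mn (Phi x) = mn x by rewrite /mn HPhi minC.
have HPhiE x : H (Phi x) = H x.
  by rewrite /H /hell2 HPhi; congr (_ - _); apply: eq_bigr => k _; rewrite mulrC.
have eL : \sum_x P x * (2 * Num.min (lambda P Phi x) (1 - lambda P Phi x)
                              * hell2 (pi0 x) (pi0 (Phi x)))
          = \sum_x mn x * H x.
  have e1 x : P x * (2 * Num.min (lambda P Phi x) (1 - lambda P Phi x)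
                              * hell2 (pi0 x) (pi0 (Phi x)))
         = (P x * (mn x / W x) * H x) + (P x * (mn x / W x) * H x).
    have l1 : 1 - lambda P Phi x = P (Phi x) / W x.
      have := Wp x; rewrite /lambda /W => Wx; field; exact: lt0r_neq0.
    rewrite l1 /lambda -/(W x) -minr_pMl; last by rewrite invr_ge0 ltW.
    rewrite -/(mn x) -/(H x); ring.
  rewrite (eq_bigr _ (fun x _ => e1 x)) big_split /=.
  rewrite -[X in X + _ = _](sum_inv (fun x => P x * (mn x / W x) * H x)) /= -big_split /=.
  apply: eq_bigr => x _; rewrite WPhi mnPhi HPhiE.
  have := Wp x; rewrite /W => Wx.
  by field; exact: lt0r_neq0.
have sa x : 2 * (mn x * H x) <= P x * G x + P (Phi x) * G (Phi x).
  have eG : G (Phi x) = \sum_k kr (q x k) (pi0 (Phi x) k) by rewrite /G -hcoh.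
  have e2H : 2 * H x = \sum_k (Num.sqrt (pi0 x k) - Num.sqrt (pi0 (Phi x) k)) ^+ 2.
    case: (hpi x) => _ s1; case: (hpi (Phi x)) => _ s2.
    have -> : \sum_k (Num.sqrt (pi0 x k) - Num.sqrt (pi0 (Phi x) k)) ^+ 2
       = \sum_k pi0 x k + \sum_k pi0 (Phi x) k - 2 * \sum_k Num.sqrt (pi0 x k * pi0 (Phi x) k).
      rewrite mulr_sumr -big_split -sumrB; apply: eq_bigr => k _ /=.
      rewrite sqrtrM ?hp0 // sqrrB !sqr_sqrtr ?hp0 //; ring.
    rewrite s1 s2 /H /hell2; ring.
  rewrite eG /G mulrCA e2H !mulr_sumr -big_split; apply: ler_sum => k _ /=.
  have k1 := kr_ge0 (hq x k) (hp0 x k) (hq0 x k).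
  have hq0' : q x k != 0 -> pi0 (Phi x) k != 0 by rewrite {1}hcoh; apply: hq0.
  have k2 := kr_ge0 (hq x k) (hp0 (Phi x) k) hq0'.
  have kp := kr_pair (hq x k) (hp0 x k) (hp0 (Phi x) k) (hq0 x k) hq0'.
  have m1 : mn x <= P x by rewrite /mn ge_min lexx.
  have m2 : mn x <= P (Phi x) by rewrite /mn ge_min lexx orbT.
  have i1 : mn x * (Num.sqrt (pi0 x k) - Num.sqrt (pi0 (Phi x) k)) ^+ 2
          <= mn x * (kr (q x k) (pi0 x k) + kr (q x k) (pi0 (Phi x) k)).
    by apply: ler_wpM2l => //; exact: ltW.
  have i2 : mn x * kr (q x k) (pi0 x k) <= P x * kr (q x k) (pi0 x k) by apply: ler_wpM2r.
  have i3 : mn x * kr (q x k) (pi0 (Phi x) k) <= P (Phi x) * kr (q x k) (pi0 (Phi x) k)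
    by apply: ler_wpM2r.
  have e : mn x * (kr (q x k) (pi0 x k) + kr (q x k) (pi0 (Phi x) k))
     = mn x * kr (q x k) (pi0 x k) + mn x * kr (q x k) (pi0 (Phi x) k) by ring.
  lra.
have sb : \sum_x (P x * G x + P (Phi x) * G (Phi x)) = 2 * \sum_x P x * G x.
  by rewrite big_split /= (sum_inv (fun x => P x * G x)); ring.
have : \sum_x 2 * (mn x * H x) <= \sum_x (P x * G x + P (Phi x) * G (Phi x)).
  by apply: ler_sum => x _; exact: sa.
rewrite sb -mulr_sumr eL.
rewrite (_ : \sum_x P x * \sum_k kr (q x k) (pi0 x k) = \sum_x P x * G x) //.
lra.
Qed.

End Hell.

Theorem corollary4 (R : realType) (X Y : finType)
  (P : X -> R) (HP : full_support_distr P)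
  (Phi : X -> X) (HPhi : involution Phi)
  (Pi : policy R X Y -> Prop) (HPi_sub : forall pi, Pi pi -> Pi_all pi)
  (HPi_closed : closed_family Pi) (HPi_conv : convex_family Pi)
  (pi0 : policy R X Y) (Hpi0 : Pi_all pi0)
  (pistar : policy R X Y) (Hstar_coh : C_coh Phi pistar) (Hstar_Pi : Pi pistar)
  (pibar : policy R X Y) (Hbar_in : C_coh_dag Phi pibar)
  (Hbar_min : forall pi, C_coh_dag Phi pi -> (Bdiv P pibar pi0 <= Bdiv P pi pi0)%E)
  (pihh : policy R X Y) (Hhh_coh : C_coh Phi pihh) (Hhh_Pi : Pi pihh)
  (Hhh_min : forall pi, C_coh Phi pi -> Pi pi -> (Bdiv P pihh pibar <= Bdiv P pi pibar)%E) :
  (Bdiv P pistar pihh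
     + (\sum_(x : X) P x * (2 * Num.min (lambda P Phi x) (1 - lambda P Phi x)
                              * hell2 (pi0 x) (pi0 (Phi x))))%:E
   <= Bdiv P pistar pi0)%E.
Proof.
have hP x : 0 < P x by case: HP => h _; exact: h.
have n0 : nonneg pi0 by move=> x k; case: (Hpi0 x) => h _; exact: h.
case: Hstar_coh => [[ns cs] ss].
case: Hbar_in => nb cb.
case: Hhh_coh => [[nh ch] sh].
have ncomb (a b : policy R X Y) t : nonneg a -> nonneg b -> 0 < t -> t <= 1 ->
    nonneg (fun x k => t * b x k + (1 - t) * a x k).
  move=> na nb' t0 t1 x k.
  have h1t : 0 <= 1 - t by rewrite subr_ge0.
  have := nb' x k; have := na x k => h1 h2.
  apply: addr_ge0; apply: mulr_ge0 => //; exact: ltW.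
have ccomb (a b : policy R X Y) t : (forall x, a x = a (Phi x)) -> (forall x, b x = b (Phi x)) ->
    forall x, (fun k => t * b x k + (1 - t) * a x k) = (fun k => t * b (Phi x) k + (1 - t) * a (Phi x) k).
  by move=> ca cb' x; rewrite -ca -cb'.
have P1 : (Bdiv P pistar pibar + Bdiv P pibar pi0 <= Bdiv P pistar pi0)%E.
  apply: epyth => //.
  move=> t t0 t1; apply: Hbar_min; split.
    by move=> x k; apply: (ncomb pibar pistar t nb ns t0 t1).
  exact: ccomb.
have P2 : (Bdiv P pistar pihh + Bdiv P pihh pibar <= Bdiv P pistar pibar)%E.
  apply: epyth => //.
  move=> t t0 t1; apply: Hhh_min.
    split; first split.
    - by move=> x k; apply: (ncomb pihh pistar t nh ns t0 t1).
    - exact: ccomb.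
    - move=> x; split; first by move=> k; apply: (ncomb pihh pistar t nh ns t0 t1).
      case: (ss x) => _ s1; case: (sh x) => _ s2.
      by rewrite big_split /= -!mulr_sumr s1 s2 !mulr1 subrKC.
  apply: HPi_conv => //.
  by rewrite (ltW t0) t1.
have Hb := hell_bound hP HPhi Hpi0 nb cb.
have Hh0 := Bdiv_ge0 hP nh nb.
apply: le_trans P1.
apply: (@le_trans _ _ (Bdiv P pistar pihh + (Bdiv P pihh pibar + Bdiv P pibar pi0))%E).
  apply: leeD => //.
  by rewrite -[X in (X <= _)%E]add0e; apply: leeD.
by rewrite addeA; apply: leeD.
Qed.
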